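(* Under both the cost preference model and the overlap preference model, the approval-maximising rule is strategyproof over the class $\mathcal{I}_{\mathit{unit}}$ of allocation instances with unit costs; that is, for every allocation instance $I=\langle\mathcal{P},c,B\rangle$ in which all projects of $\mathcal{P}$ have the same cost, every profile $\boldsymbol{A}$ and every agent $i\in\mathcal{N}$, $F(I,(\boldsymbol{A}_{-i},\mathit{top}_i(\mathcal{P})))\succeq_{\mathit{top}_i(\mathcal{P})}F(I,\boldsymbol{A})$, where $F$ is the approval-maximising rule.
   Context: Let $\mathbb{P}=\{p_1,\dots,p_m\}$ be a finite set of projects, $c:\mathbb{P}\to\mathbb{N}$ a cost function with $c(P)=\sum_{p\in P}c(p)$, $B\in\mathbb{N}$ a budget with $c(p)\le B$ for all $p$; agents $\mathcal{N}=\{1,\dots,n\}$. An allocation instance is $I=\langle\mathcal{P},c,B\rangle$ with $\mathcal{P}\subseteq\mathbb{P}$; a profile is $\boldsymbol{A}=(A_1,\dots,A_n)$ with $A_i\subseteq\mathcal{P}$; $(\boldsymbol{A}_{-i},A_i')$ replaces $A_i$ by $A_i'$; $n_p^{\boldsymbol{A}}=|\{i:p\in A_i\}|$; $\mathcal{A}(I)$ is the set of $A\subseteq\mathcal{P}$ with $c(A)\le B$. Tie-breaking: for a nonempty family $\mathfrak{P}$ of subsets of $\mathbb{P}$, $T(\mathfrak{P})$ is the unique $P\in\mathfrak{P}$ such that for all $P'\in\mathfrak{P}\setminus\{P\}$ the lowest-index project of $(P\setminus P')\cup(P'\setminus P)$ lies in $P$. The approval-maximising rule returns $F(I,\boldsymbol{A})=T(\operatorname*{argmax}_{A\in\mathcal{A}(I)}\sum_{p\in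 A}n_p^{\boldsymbol{A}})$. Greedy selection $\mathit{GREED}(P,\gg)$, for $P\subseteq\mathbb{P}$ and a strict linear order $\gg$ on $P$, examines projects in the order $\gg$ and selects a project iff doing so keeps the total cost of selected projects at most $B$. Each agent $i$ has a strict linear order $\rhd_i$ on $\mathbb{P}$ and ideal set $\mathit{top}_i(\mathcal{P})=\mathit{GREED}(\mathcal{P},\rhd_i|_{\mathcal{P}})$. For $P\subseteq\mathbb{P}$: under the overlap model $A\succeq_P A'$ iff $|A\cap P|\ge|A'\cap P|$; under the cost model $A\succeq_P A'$ iff $c(A\cap P)\ge c(A'\cap P)$. *)

(* Defs.v *)
From mathcomp Require Import all_boot all_order.
From mathcomp Require Import perm.
Set Implicit Arguments. Unset Strict Implicit. Unset Printing Implicit Defensive.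

Section PB.
(* Projects p_1..p_m are the ordinals 'I_m; index order = order of 'I_m. *)
Variable m : nat.
Notation proj := 'I_m.
Variable c : proj -> nat.
Variable B : nat.

Definition cost (S : {set proj}) : nat := \sum_(p in S) c p.

Definition tb_beats (S S' : {set proj}) : bool :=
  [exists p : proj, [&& p \in S, p \notin S' &
     [forall q : proj, (q < p)%N ==> ((q \in S) == (q \in S'))]]].

(* T(family): the unique member beating all others (set0 if none exists,
   which cannot happen for a nonempty family). *)
Definition tiebreak (fam : {set {set proj}}) : {set proj} :=
  odflt set0 [pick S in fam | [forall S' in fam, (S' != S) ==> tb_beats S S']].

Definition napp (n : nat) (A : 'I_n -> {set proj}) (p : proj) : nat :=
  #|[set i : 'I_n | p \in A i]|.

Definition score (n : nat) (A : 'I_n -> {set proj}) (S : {set proj}) : nat :=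
  \sum_(p in S) napp A p.

Definition feasible (P : {set proj}) : {set {set proj}} :=
  [set S : {set proj} | (S \subset P) && (cost S <= B)].

Definition approval_max (P : {set proj}) (n : nat) (A : 'I_n -> {set proj})
  : {set proj} :=
  tiebreak [set S in feasible P |
             [forall S' in feasible P, score A S' <= score A S]].

(* GREED(P, >>) where the order is given by the sequence s (first = best). *)
Definition greed (s : seq proj) : {set proj} :=
  foldl (fun S p => if cost (p |: S) <= B then p |: S else S) set0 s.

(* A strict linear order on projects is encoded by a permutation r:
   r k is the (k+1)-th most preferred project. *)
Definition pref_list (r : {perm proj}) : seq proj := [seq r k | k <- enum 'I_m].

Definition top (r : {perm proj}) (P : {set proj}) : {set proj} :=
  greed [seq p <- pref_list r | p \in P].

Definition overlap_ge (Q S S' : {set proj}) : bool := #|S' :&: Q| <= #|S :&: Q|.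
Definition cost_ge (Q S S' : {set proj}) : bool := cost (S' :&: Q) <= cost (S :&: Q).

End PB.

Definition replace_ballot (m n : nat) (A : 'I_n -> {set 'I_m}) (i : 'I_n)
  (Ai : {set 'I_m}) : 'I_n -> {set 'I_m} :=
  fun j => if j == i then Ai else A j.

(* Main.v *)
Require Import Defs.
From mathcomp Require Import all_boot all_order perm.
From mathcomp Require Import zify.
Set Implicit Arguments. Unset Strict Implicit. Unset Printing Implicit Defensive.

Definition agree m (j : nat) (S S' : {set 'I_m}) :=
  [forall q : 'I_m, (q < j) ==> ((q \in S) == (q \in S'))].
Definition bb m (j : nat) (S S' : {set 'I_m}) :=
  [exists p : 'I_m, [&& p < j, p \in S, p \notin S' &
     [forall q : 'I_m, (q < p) ==> ((q \in S) == (q \in S'))]]].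

Lemma bbS m j (S S' : {set 'I_m}) : bb j S S' -> bb j.+1 S S'.
Proof.
case/existsP=> p /and4P[pj pS pS' H]; apply/existsP; exists p.
by rewrite pS pS' H ltnS (ltnW pj).
Qed.

Lemma agree_refl m j (S : {set 'I_m}) : agree j S S.
Proof. by apply/forallP => q; rewrite eqxx implybT. Qed.

Lemma ex_best m (fam : {set {set 'I_m}}) S0 : S0 \in fam -> forall j,
  exists2 S, S \in fam & forall S', S' \in fam -> agree j S S' || bb j S S'.
Proof.
move=> S0f; elim=> [|j [S Sf HS]].
  by exists S0 => // S' _; apply/orP; left; apply/forallP => q; rewrite ltn0.
case: (ltnP j m) => [ltjm|lemj]; last first.
  exists S => // S' S'f; case/orP: (HS S' S'f) => [/forallP Ha|Hb].
    apply/orP; left; apply/forallP => q; apply/implyP => _.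
    by have := Ha q; rewrite (leq_trans (ltn_ord q) lemj).
  by rewrite bbS ?orbT.
pose pj := Ordinal ltjm.
case: (pickP [pred S'' | (S'' \in fam) && agree j S S'' && (pj \in S'')])
   => [S'' /= /andP[/andP[S''f /forallP agS''] pjS''] | none].
  exists S'' => // S' S'f; case/orP: (HS S' S'f) => [/forallP agS'|bbS'].
    case: (boolP (pj \in S')) => pjS'.
      apply/orP; left; apply/forallP => q; apply/implyP => qj.
      have [qj'|qe] : (q < j) \/ (nat_of_ord q = j) by lia.
        by have := implyP (agS'' q) qj'; have := implyP (agS' q) qj'; move=> /eqP <- /eqP <-.
      have qpj : q = pj by apply: val_inj => /=; rewrite qe.
      by rewrite qpj pjS'' pjS'.
    apply/orP; right; apply/existsP; exists pj; rewrite /= ltnSn pjS'' pjS' /=.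
    apply/forallP => q; apply/implyP => qj.
    by have := implyP (agS'' q) qj; have := implyP (agS' q) qj; move=> /eqP <- /eqP <-.
  apply/orP; right; case/existsP: bbS' => p /and4P[pjj pS pS' /forallP H].
  apply/existsP; exists p; rewrite pS' ltnS (ltnW pjj) /=.
  have := implyP (agS'' p) pjj; rewrite pS eq_sym => /eqP ->; rewrite andTb.
  apply/forallP => q; apply/implyP => qp.
  have := implyP (agS'' q) (ltn_trans qp pjj); have := implyP (H q) qp.
  by move=> /eqP <- /eqP <-.
have pjS : pj \notin S by have := none S; rewrite /= Sf agree_refl /= => ->.
exists S => // S' S'f; case/orP: (HS S' S'f) => [agS'|bbS']; last by rewrite bbS ?orbT.
have pjS' : pj \notin S' by have := none S'; rewrite /= S'f agS' /= => ->.
apply/orP; left; apply/forallP => q; apply/implyP => qj.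
have [qj'|qe] : (q < j) \/ (nat_of_ord q = j) by lia.
  by have := implyP (forallP agS' q) qj'.
have qpj : q = pj by apply: val_inj => /=; rewrite qe.
by rewrite qpj (negbTE pjS) (negbTE pjS').
Qed.

Lemma tiebreak_spec m (fam : {set {set 'I_m}}) S0 : S0 \in fam ->
  tiebreak fam \in fam /\
  forall S', S' \in fam -> S' != tiebreak fam -> tb_beats (tiebreak fam) S'.
Proof.
move=> S0f; rewrite /tiebreak; case: pickP => [S /andP[Sf /forallP H] | none] /=.
  split=> // S' S'f neq; have := H S'; rewrite S'f neq; by [].
exfalso; have [S Sf HS] := ex_best S0f m.
have := none S; rewrite /= Sf /=; move/negP; apply.
apply/forallP => S'; apply/implyP => S'f; apply/implyP => neq.
case/orP: (HS S' S'f) => [/forallP ag | bbS].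
  move/eqP: neq => []; apply/setP => q.
  by have := implyP (ag q) (ltn_ord q); rewrite eq_sym => /eqP.
case/existsP: bbS => p /and4P[_ pS pS' Hq]; apply/existsP; exists p.
by rewrite pS pS' Hq.
Qed.

Section Main.
Variables (m : nat) (c : 'I_m -> nat) (B : nat) (P : {set 'I_m}).
Hypothesis hunit : forall p q : 'I_m, p \in P -> q \in P -> c p = c q.

Lemma costE (S : {set 'I_m}) p0 : S \subset P -> p0 \in P -> cost c S = #|S| * c p0.
Proof.
move=> sSP p0P; rewrite /cost (eq_bigr (fun _ => c p0)); first by rewrite sum_nat_const.
by move=> p pS; apply: hunit => //; exact: (subsetP sSP).
Qed.

Lemma score_swap n (A : 'I_n -> {set 'I_m}) (S : {set 'I_m}) x y : x \in S -> y \notin S ->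
  score A (y |: (S :\ x)) + napp A x = score A S + napp A y.
Proof.
move=> xS yS; rewrite /score big_setU1 /=; last by rewrite in_setD1 (negbTE yS) andbF.
rewrite (big_setD1 x xS) /=; lia.
Qed.

Lemma card_swap (S : {set 'I_m}) x y : x \in S -> y \notin S -> #|y |: (S :\ x)| = #|S|.
Proof.
move=> xS yS; rewrite cardsU1 in_setD1 (negbTE yS) andbF (cardsD1 x S) xS; by [].
Qed.

Lemma swap_sub (S : {set 'I_m}) x y : S \subset P -> y \in P -> y |: (S :\ x) \subset P.
Proof.
move=> SP yP; apply/subsetP => z; rewrite in_setU1 in_setD1 => /orP[/eqP -> //|/andP[_ zS]].
exact: (subsetP SP).
Qed.

Lemma cost_swap (S : {set 'I_m}) x y : S \subset P -> x \in S -> y \in P -> y \notin S ->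
  cost c (y |: (S :\ x)) = cost c S.
Proof.
move=> SP xS yP yS; have xP := subsetP SP x xS.
by rewrite (costE _ xP) ?swap_sub // (costE _ xP) // card_swap.
Qed.

Lemma beat_swap (S : {set 'I_m}) x y : x \in S -> y \notin S ->
  tb_beats S (y |: (S :\ x)) -> x < y.
Proof.
move=> xS yS /existsP [p /and3P [pS pG /forallP H]].
have px : p = x.
  by move: pG; rewrite in_setU1 in_setD1 pS andbT negb_or => /andP[_ /negPn /eqP].
subst p; rewrite ltnNge leq_eqVlt negb_or; apply/andP; split.
  apply/negP => /eqP e; have yx : y = x by apply: val_inj.
  by move: yS; rewrite yx xS.
apply/negP => yx; move: (H y); rewrite yx (negbTE yS) in_setU1 eqxx; by [].
Qed.

Lemma F_spec n (A : 'I_n -> {set 'I_m}) : let F := approval_max c B P A in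
  [/\ F \subset P, cost c F <= B,
     (forall S : {set 'I_m}, S \subset P -> cost c S <= B -> score A S <= score A F) &
     (forall S : {set 'I_m}, S \subset P -> cost c S <= B -> score A F <= score A S -> S != F ->
        tb_beats F S)].
Proof.
set fam := [set S in feasible c B P | [forall S' in feasible c B P, score A S' <= score A S]].
have f0 : set0 \in feasible c B P by rewrite inE sub0set /cost big_set0.
have [S0 S0f S0max] : exists2 S0, S0 \in feasible c B P &
    forall S, S \in feasible c B P -> score A S <= score A S0.
  by case: (arg_maxnP (score A) f0) => S0 S0f H; exists S0.
have S0fam : S0 \in fam.
  by rewrite inE S0f /=; apply/forallP => S; apply/implyP; exact: S0max.
have [Ff Fb] := tiebreak_spec S0fam.
move=> F; rewrite /F /approval_max -/fam.
move: (Ff); rewrite inE => /andP[]; rewrite inE => /andP[FP Fc] /forallP Fmax.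
split=> //.
  by move=> S SP Sc; have := Fmax S; rewrite inE SP Sc.
move=> S SP Sc le neq; apply: Fb => //; rewrite inE inE SP Sc /=.
apply/forallP=> S'; apply/implyP => S'f; apply: leq_trans le.
by have := Fmax S'; rewrite S'f.
Qed.

Lemma napp_repl n (A : 'I_n -> {set 'I_m}) i T p :
  napp (replace_ballot A i T) p + (p \in A i) = napp A p + (p \in T).
Proof.
rewrite /napp (cardsD1 i [set j | p \in replace_ballot A i T j])
   (cardsD1 i [set j | p \in A j]) !inE /replace_ballot eqxx.
have -> : [set j | p \in (if j == i then T else A j)] :\ i = [set j | p \in A j] :\ i.
  by apply/setP => j; rewrite !inE; case: eqP.
lia.
Qed.

End Main.

Lemma arith (sG sF sH sF2 wx wy vx vy : nat) (ax ay : bool) :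
  sG + wx = sF + wy -> sH + vy = sF2 + vx -> sG <= sF -> sH <= sF2 ->
  vx + ax = wx + 1 -> vy + ay = wy + 0 -> sG = sF /\ sH = sF2.
Proof. case: ax; case: ay => /=; lia. Qed.

Theorem proposition9 (m : nat) (c : 'I_m -> nat) (B : nat)
  (hcB : forall p : 'I_m, c p <= B)
  (P : {set 'I_m})
  (hunit : forall p q : 'I_m, p \in P -> q \in P -> c p = c q)
  (n : nat) (A : 'I_n -> {set 'I_m})
  (hA : forall j : 'I_n, A j \subset P)
  (pref : 'I_n -> {perm 'I_m}) (i : 'I_n) :
  let T := top c B (pref i) P in
  let F := approval_max c B P in
  cost_ge c T (F n (replace_ballot A i T)) (F n A) /\
  overlap_ge T (F n (replace_ballot A i T)) (F n A).
Proof.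
move=> T F; rewrite /F.
set A' := replace_ballot A i T.
set F1 := approval_max c B P A. set F2 := approval_max c B P A'.
have [F1P F1c F1max F1tb] := F_spec c B P A.
have [F2P F2c F2max F2tb] := F_spec c B P A'.
rewrite -/F1 -/F2 in F1P F1c F1max F1tb F2P F2c F2max F2tb.
have key : #|F1 :&: T| <= #|F2 :&: T|.
  rewrite leqNgt; apply/negP => lt.
  case: (boolP (P \subset F2)) => [PF2|].
    have := subset_leq_card (setSI T (subset_trans F1P PF2)); lia.
  case/subsetPn => q qP qF2.
  have maxF2 : B < cost c (q |: F2).
    rewrite ltnNge; apply/negP => hc.
    have sub : q |: F2 \subset P.
      by apply/subsetP => z; rewrite in_setU1 => /orP[/eqP -> //|]; apply: (subsetP F2P).
    have := F2tb (q |: F2) sub hc.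
    rewrite /score big_setU1 //= leq_addl => /(_ isT).
    have neq : q |: F2 != F2.
      by apply/eqP => e; move: qF2; rewrite -e setU11.
    move=> /(_ neq) /existsP [p /and3P [pF2 pn _]].
    by move: pn; rewrite in_setU1 pF2 orbT.
  have cardle : #|F1| <= #|F2|.
    move: maxF2 F1c; rewrite (costE hunit _ qP) //; last first.
      by apply/subsetP => z; rewrite in_setU1 => /orP[/eqP -> //|]; apply: (subsetP F2P).
    rewrite (costE hunit F1P qP) cardsU1 qF2; nia.
  have [x xin xnot] : exists2 x, x \in F1 :&: T & x \notin F2 :&: T.
    apply/subsetPn; apply/negP => /subset_leq_card; lia.
  have [y yin ynot] : exists2 y, y \in F2 :\: T & y \notin F1 :\: T.
    apply/subsetPn; apply/negP => /subset_leq_card.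
    have := cardsID T F1; have := cardsID T F2; lia.
  move: xin xnot; rewrite !inE => /andP[xF1 xT]; rewrite xT andbT => xF2.
  move: yin ynot; rewrite !inE => /andP[yT yF2]; rewrite yT /= => yF1.
  have xP := subsetP F1P x xF1; have yP := subsetP F2P y yF2.
  have s1 := score_swap A xF1 yF1.
  have s2 := score_swap A' yF2 xF2.
  have GP := swap_sub x F1P yP. have HP := swap_sub y F2P xP.
  have Gc := cost_swap hunit F1P xF1 yP yF1.
  have Hc := cost_swap hunit F2P yF2 xP xF2.
  have m1 := F1max _ GP (eq_ind_r (fun v => v <= B) F1c Gc).
  have m2 := F2max _ HP (eq_ind_r (fun v => v <= B) F2c Hc).
  have n1 := napp_repl A i T x; have n2 := napp_repl A i T y.
  rewrite -/A' xT (negbTE yT) in n1 n2.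
  have eqs : score A (y |: (F1 :\ x)) = score A F1 /\ score A' (x |: (F2 :\ y)) = score A' F2.
    exact: (arith s1 s2 m1 m2 n1 n2).
  case: eqs => e1 e2.
  have xy : x != y by apply/eqP => e; move: xT; rewrite e (negbTE yT).
  have l1 : x < y.
    apply: (beat_swap xF1 yF1); apply: F1tb => //; first by rewrite Gc.
      by rewrite e1.
    apply/eqP => e; move: xF1; rewrite -e !inE eqxx /= orbF.
    by rewrite (negbTE xy).
  have l2 : y < x.
    apply: (beat_swap yF2 xF2); apply: F2tb => //; first by rewrite Hc.
      by rewrite e2.
    apply/eqP => e; move: yF2; rewrite -e !inE eqxx /= orbF.
    by rewrite eq_sym (negbTE xy).
  by move: (ltn_trans l1 l2); rewrite ltnn.
split; last by [].
rewrite /cost_ge; case: (set_0Vmem (F1 :&: T)) => [->|[p0 p0in]].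
  by rewrite /cost_ge /cost big_set0.
have p0P : p0 \in P by move: p0in; rewrite inE => /andP[/(subsetP F1P)].
rewrite /cost_ge (costE hunit _ p0P) ?(costE hunit _ p0P) ?leq_mul2r ?key ?orbT //.
all: first [exact: subset_trans (subsetIl _ _) F1P | exact: subset_trans (subsetIl _ _) F2P].
Qed.
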